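(* Let $0<\phi\le1$, let $\mathcal{Q}=\{P_1,\dots,P_k\}$ be a set of polygons and $w_i=\phi\cdot d(P_i)$. Let $P_{\min}=P_j\in\mathcal{Q}$ be a polygon minimizing $|P_j^+(w_j/2)|$ and write $P^+_{\min}(w/2)=P_j^+(w_j/2)$; let $d_{\min}=\min_{P_i\in\mathcal{Q}}d(P_i)$. Let $\cap\mathcal{Q}^-(w)=\bigcap_i P_i^-(w_i)$ and $\cap\mathcal{Q}^+(w/2)=\bigcap_i P_i^+(w_i/2)$. If $\cap\mathcal{Q}^-(w)\neq\emptyset$ and $\phi\cdot d_{\min}>\sqrt8$, then $$\frac{\phi^2}{2}\cdot|P^+_{\min}(w/2)|\le|\cap\mathcal{Q}^+(w/2)|\le|P^+_{\min}(w/2)|.$$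
   Context: $d(P)$ is the diameter of $P$. For a polygon $P$ and $r\ge0$, $P^+(r)$ is the set of points at distance at most $r$ from some point of $P$, and $P^-(r)$ is the set of points of $P$ at distance at least $r$ from every point outside $P$. $|X|$ denotes the number of points of $\mathbb{Z}^2$ in the region $X$. *)

(* Defs.v *)
From HB Require Import structures.
From mathcomp Require Import all_boot all_order all_algebra.
From mathcomp Require Import all_classical all_reals all_analysis.
From mathcomp Require Import finmap.
Set Implicit Arguments. Unset Strict Implicit. Unset Printing Implicit Defensive.
Import Order.TTheory GRing.Theory Num.Theory numFieldNormedType.Exports.
Local Open Scope classical_set_scope.
Local Open Scope ring_scope.

Section Plane.
Variable R : realType.
Notation pt := (R * R)%type.

Definition dist (x y : pt) : R :=
  Num.sqrt ((x.1 - y.1) ^+ 2 + (x.2 - y.2) ^+ 2).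

Definition segment (a b : pt) : set pt :=
  [set p | exists t : R, 0 <= t <= 1 /\
     p = (a.1 + t * (b.1 - a.1), a.2 + t * (b.2 - a.2))].

Definition bounded2 (S : set pt) : Prop :=
  exists M : R, forall y, S y -> `|y.1| <= M /\ `|y.2| <= M.

Definition edge (v : seq pt) (i : nat) : set pt :=
  segment (nth (0,0) v i) (nth (0,0) v ((i.+1) %% size v)%N).

Definition simple_chain (v : seq pt) : Prop :=
  (3 <= size v)%N /\ uniq v /\
  forall i j, (i < size v)%N -> (j < size v)%N -> i <> j ->
    (j = ((i.+1) %% size v)%N ->
       edge v i `&` edge v j = [set nth (0,0) v j]) /\
    (j <> ((i.+1) %% size v)%N -> i <> ((j.+1) %% size v)%N ->
       edge v i `&` edge v j = set0).

Definition boundary_chain (v : seq pt) : set pt :=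
  \bigcup_(i in [set i | (i < size v)%N]) edge v i.

Definition polygon_of (v : seq pt) : set pt :=
  [set x | boundary_chain v x \/
     (~ boundary_chain v x /\
      bounded2 (connected_component (~` boundary_chain v) x))].

Definition is_polygon (P : set pt) : Prop :=
  exists v : seq pt, simple_chain v /\ P = polygon_of v.

Definition diam (P : set pt) : R :=
  sup [set r | exists x y, P x /\ P y /\ r = dist x y].

Definition offset_plus (P : set pt) (r : R) : set pt :=
  [set x | exists y, P y /\ dist x y <= r].

Definition offset_minus (P : set pt) (r : R) : set pt :=
  [set x | P x /\ forall y, ~ P y -> r <= dist x y].

(* |X| : number of points of Z^2 in X (all sets considered are bounded,
   hence contain finitely many lattice points) *)
Definition lattice_count (X : set pt) : nat :=
  (#|` fset_set [set z : int * int | X ((z.1)%:~R, (z.2)%:~R)] |)%fset.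

End Plane.

(* Main.v *)
Set Warnings "-notation-overridden,-ambiguous-paths,-notation-incompatible-prefix".
Require Import Defs.
From HB Require Import structures.
From mathcomp Require Import all_boot all_order all_algebra.
From mathcomp Require Import all_classical all_reals all_analysis.
From mathcomp Require Import finmap.
From mathcomp Require Import ring lra.
Import Order.TTheory GRing.Theory Num.Theory numFieldNormedType.Exports.
Local Open Scope classical_set_scope.
Local Open Scope ring_scope.
Set Implicit Arguments. Unset Strict Implicit.
Section Aux.
Variable R : realType.
Notation pt := (R * R)%type.

Lemma dist_ge0 (a b : pt) : 0 <= dist a b.
Proof. exact: sqrtr_ge0. Qed.

Lemma dist_sym (a b : pt) : dist a b = dist b a.
Proof. by rewrite /dist -(sqrrN (a.1 - b.1)) -(sqrrN (a.2 - b.2)) !opprB. Qed.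

Lemma dist_scale (a b u v : pt) (s : R) :
  a.1 - b.1 = s * (u.1 - v.1) -> a.2 - b.2 = s * (u.2 - v.2) ->
  dist a b = `|s| * dist u v.
Proof.
rewrite /dist => -> ->; rewrite !exprMn -mulrDr sqrtrM ?sqr_ge0 //.
by rewrite sqrtr_sqr.
Qed.

Lemma dist_self (a : pt) : dist a a = 0.
Proof. by rewrite /dist !subrr expr0n /= addr0 sqrtr0. Qed.

Lemma dist_c1 (a b : pt) : `|a.1 - b.1| <= dist a b.
Proof.
rewrite /dist -sqrtr_sqr; apply: ler_wsqrtr.
by rewrite lerDl sqr_ge0.
Qed.

Lemma dist_c2 (a b : pt) : `|a.2 - b.2| <= dist a b.
Proof.
rewrite /dist -sqrtr_sqr; apply: ler_wsqrtr.
by rewrite lerDr sqr_ge0.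
Qed.

Lemma dist_lt (a b : pt) r : 0 < r ->
  (a.1 - b.1) ^+ 2 + (a.2 - b.2) ^+ 2 < r ^+ 2 -> dist a b < r.
Proof.
move=> r0 h; rewrite /dist -(ger0_norm (ltW r0)) -sqrtr_sqr ltr_sqrt //.
by rewrite exprn_gt0.
Qed.

End Aux.
Section Geo.
Variable R : realType.
Notation pt := (R * R)%type.

Lemma lowerA (P : set pt) (c z : pt) (w : R) : 0 < w -> P c ->
  (forall y, ~ P y -> w <= dist c y) -> dist z c < 3 * w / 2 ->
  exists y, P y /\ dist z y <= w / 2.
Proof.
move=> w0 Pc hc hz.
have [h|h] := lerP (dist z c) (w / 2); first by exists c.
set D := dist z c in h hz.
have D0 : 0 < D by apply: lt_trans h; lra.
pose t := (D - w / 2) / D.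
have tD : t * D = D - w / 2 by rewrite /t mulrAC -mulrA divff ?mulr1 // gt_eqF.
have t0 : 0 <= t by rewrite /t divr_ge0 //; lra.
have t1 : t <= 1 by rewrite /t ler_pdivrMr // mul1r; lra.
pose y : pt := (c.1 + t * (z.1 - c.1), c.2 + t * (z.2 - c.2)).
have dyc : dist y c = D - w / 2.
  rewrite (@dist_scale _ y c z c t) /=; [|ring|ring].
  by rewrite ger0_norm.
have dzy : dist z y = w / 2.
  rewrite (@dist_scale _ z y z c (1 - t)) /=; [|ring|ring].
  rewrite ger0_norm ?subr_ge0 // -/D mulrBl mul1r tD; ring.
exists y; split => //.
case: (pselect (P y)) => // nPy; exfalso.
have := hc y nPy; rewrite dist_sym dyc; lra.
by rewrite dzy.
Qed.

Lemma upperB (P : set pt) (c y : pt) (w d : R) : 0 < w -> w <= d -> P c ->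
  (forall y, ~ P y -> w <= dist c y) ->
  (forall x y, P x -> P y -> dist x y <= d) -> P y -> dist c y <= d - w.
Proof.
move=> w0 wd Pc hc hd Py; rewrite leNgt; apply/negP => hD.
set D := dist c y in hD.
have D0 : 0 < D by apply: le_lt_trans hD; lra.
have Dd : D <= d by exact: hd.
pose t := (w + d - D) / (2 * D).
have tD : t * D = (w + d - D) / 2.
  by rewrite /t; field; rewrite gt_eqF.
have t0 : 0 <= t by rewrite /t divr_ge0 //; lra.
pose q : pt := (c.1 + t * (c.1 - y.1), c.2 + t * (c.2 - y.2)).
have dqc : dist q c = (w + d - D) / 2.
  rewrite (@dist_scale _ q c c y t) /=; [|ring|ring].
  by rewrite ger0_norm.
have dqy : dist q y = D + (w + d - D) / 2.
  rewrite (@dist_scale _ q y c y (1 + t)) /=; [|ring|ring].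
  rewrite ger0_norm; last lra.
  rewrite -/D mulrDl mul1r tD //.
have Pq : P q.
  case: (pselect (P q)) => // nPq; exfalso.
  have := hc q nPq; rewrite dist_sym dqc; lra.
have := hd q y Pq Py; rewrite dqy; lra.
Qed.

End Geo.
Section Count.
Variable R : realType.
Notation pt := (R * R)%type.

Lemma box_low (x h : R) (a : nat) : 0 <= h -> (a < Num.truncn (2 * h))%N ->
  `|(Num.ceil (x - h) + Posz a)%:~R - x| <= h.
Proof.
move=> h0 ha.
have h1 := ceil_ge (x - h).
have h2 := ceilB1_lt (x - h).

have h3 : a.+1%:R <= 2 * h.
  by rewrite -truncn_ge_nat // mulr_ge0.
rewrite -natr1 in h3.
rewrite intrD /= -[_ (- 1)]/(-1) in h2.
rewrite intrD -pmulrn ler_norml; have a0 : 0 <= a%:R :> R := ler0n _ _.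
  apply/andP; split; lra.
Qed.


Lemma count_lower (c : pt) (h : R) (S : set (int * int)) : 0 <= h ->
  finite_set S ->
  (forall z : int * int, `|z.1%:~R - c.1| <= h -> `|z.2%:~R - c.2| <= h -> S z) ->
  exists n : nat, 2 * h - 1 <= n%:R /\ (n * n <= #|` fset_set S|)%N.
Proof.
move=> h0 finS hS.
set n := Num.truncn (2 * h).
exists n; split.
  have := truncnS_gt (2 * h); rewrite -/n -natr1; lra.
pose g k : int * int := (Num.ceil (c.1 - h) + Posz (k %/ n)%N,
                         Num.ceil (c.2 - h) + Posz (k %% n)%N).
have ginj : {in `I_(n * n) &, injective g}.
  move=> k k' _ _ [] /addrI [] e1 /addrI [] e2.
  by rewrite (divn_eq k n) (divn_eq k' n) e1 e2.
have gS : g @` `I_(n * n) `<=` S.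
  move=> _ [k kn <-]; rewrite /= in kn.
  have n0 : (0 < n)%N by move: kn; rewrite lt0n; apply: contraTneq => ->.
  apply: hS => /=; apply: box_low => //.
    by rewrite ltn_divLR.
  by rewrite ltn_pmod.
apply: leq_card_fset_set => //.
apply: (card_le_trans _ (subset_card_le gS)).
have := card_esym (inj_card_eq ginj).
by case/card_eqPle.
Qed.


Lemma box_up (x r : R) (z : int) : 0 <= r -> `|z%:~R - x| <= r ->
  exists2 a : nat, (a < (Num.truncn (2 * r)).+1)%N & z = Num.ceil (x - r) + Posz a.
Proof.
move=> r0; rewrite ler_norml => /andP[l1 l2].
set lo := Num.ceil (x - r).
have le1 : lo <= z by rewrite /lo ceil_le_int; lra.
have le2 : x - r <= lo%:~R by exact: ceil_ge.
exists `|z - lo|%N.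
  rewrite ltnS truncn_ge_nat ?mulr_ge0 //.
  have -> : (`|z - lo|%N)%:R = (z - lo)%:~R :> R.
    have zl : 0 <= z - lo by rewrite subr_ge0.
    by rewrite -{2}(gez0_abs zl) pmulrn.
  rewrite intrB; lra.
have zl : 0 <= z - lo by rewrite subr_ge0.
by rewrite (gez0_abs zl); ring.
Qed.

Lemma count_upper (c : pt) (r : R) (S : set (int * int)) : 0 <= r ->
  (forall z, S z -> `|z.1%:~R - c.1| <= r /\ `|z.2%:~R - c.2| <= r) ->
  exists m : nat, m%:R <= 2 * r + 1 /\ finite_set S /\
    (#|` fset_set S| <= m * m)%N.
Proof.
move=> r0 hS.
set m := (Num.truncn (2 * r)).+1.
pose f k : int * int := (Num.ceil (c.1 - r) + Posz (k %/ m)%N,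
                         Num.ceil (c.2 - r) + Posz (k %% m)%N).
have Sf : S `<=` f @` `I_(m * m).
  move=> [z1 z2] /hS [/= /(@box_up _ _ _ r0) [a am ->] /(@box_up _ _ _ r0) [b bm ->]].
  exists (a * m + b)%N.
    rewrite /= (leq_trans (_ : _ < a * m + m)%N) ?ltn_add2l //.
    by rewrite -mulSnr leq_mul2r am orbT.
  rewrite /f /= divnMDl ?modnMDl ?divn_small ?modn_small ?addn0 //.
have Sle : (S #<= `I_(m * m))%card.
  exact: card_le_trans (subset_card_le Sf) (card_image_le _ _).
exists m; split; last split.
- rewrite /m -natr1 lerD2r truncn_le mulr_ge0 //.
- exact: card_le_finite Sle (finite_II _).
- exact: geq_card_fset_set.
Qed.

End Count.
Lemma sq_le (R : realType) (a b : R) : `|a| <= b -> a ^+ 2 <= b ^+ 2.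
Proof. rewrite ler_norml => /andP[h1 h2]; nra. Qed.

Lemma arith1 (R : realType) (u2 v2 h X Y : R) : u2 <= h ^+ 2 -> v2 <= h ^+ 2 ->
  h = 21 / 20 * X -> 0 < X -> X <= Y -> u2 + v2 < (3 * Y / 2) ^+ 2.
Proof.
move=> hu hv hE X0 XY; rewrite {}hE in hu hv.
have XY2 : X ^+ 2 <= Y ^+ 2 by rewrite ler_pXn2r // ?nnegrE ltW // (lt_le_trans X0).
have e1 : (3 * Y / 2) ^+ 2 = 9 / 4 * Y ^+ 2 by field.
have e2 : (21 / 20 * X) ^+ 2 = 441 / 400 * X ^+ 2 by field.
have X2 : 0 < X ^+ 2 by rewrite exprn_gt0.
rewrite e1; rewrite e2 in hu hv; lra.
Qed.

Lemma arith2 (R : realType) (phi dm M N Pm Cq : R) : 0 < phi -> phi <= 1 ->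
  28 / 10 < phi * dm -> 0 <= M -> M <= 2 * (dm - phi * dm / 2) + 1 ->
  2 * (21 / 20 * (phi * dm)) - 1 <= N -> 0 <= N -> Pm <= M * M ->
  N * N <= Cq -> phi ^+ 2 / 2 * Pm <= Cq.
Proof.
move=> phi0 phi1 x28 M0 mle nge N0 HPm Cn.
set x := phi * dm in x28 mle nge.
have pM : phi * M <= 2 * x + 1.
  have : phi * M <= phi * (2 * (dm - x / 2) + 1) by rewrite ler_pM2l.
  have e : phi * (2 * (dm - x / 2) + 1) = 2 * x - phi * x + phi by rewrite /x; field.
  have : 0 <= phi * x by rewrite mulr_ge0 // ltW // (lt_trans _ x28).
  rewrite e; lra.
have pM0 : 0 <= phi * M by rewrite mulr_ge0 // ltW.
have N1 : phi * M <= 7 / 5 * N by lra.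
have h2 : (phi * M) ^+ 2 <= (7 / 5 * N) ^+ 2.
  by rewrite ler_pXn2r // nnegrE mulr_ge0.
have e : (phi * M) ^+ 2 = phi ^+ 2 * (M * M) by ring.
have e2 : (7 / 5 * N) ^+ 2 = 49 / 25 * (N * N) by field.
rewrite e e2 in h2.
have : phi ^+ 2 * Pm <= phi ^+ 2 * (M * M) by rewrite ler_pM2l ?exprn_gt0.
have NN : 0 <= N * N by rewrite mulr_ge0.
have e3 : phi ^+ 2 / 2 * Pm = (phi ^+ 2 * Pm) / 2 by field.
rewrite e3; lra.
Qed.

Lemma diam_ub (R : realType) (Q : set (R * R)) : 0 < diam Q ->
  forall x y, Q x -> Q y -> dist x y <= diam Q.
Proof.
move=> d0 x y Qx Qy.
case: (pselect (has_sup [set r | exists x y, Q x /\ Q y /\ r = dist x y])) => hs.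
  by apply: (sup_upper_bound hs); exists x, y.
by move: d0; rewrite /diam sup_out // ltxx.
Qed.

Lemma bigmin_in (R : realType) n (F : 'I_n.+1 -> R) :
  exists i, \big[Order.min/F ord0]_(i < n.+1) F i = F i.
Proof.
apply: (big_ind (fun v => exists i, v = F i)); first by exists ord0.
  move=> a b [i ->] [i' ->]; rewrite /Order.min; case: ifP => _.
    by exists i. by exists i'.
by move=> i _; exists i.
Qed.

Lemma bigmin_le' (R : realType) n (F : 'I_n.+1 -> R) j :
  \big[Order.min/F ord0]_(i < n.+1) F i <= F j.
Proof. exact: bigmin_le. Qed.

Theorem lemma15 (R : realType) (phi : R) (k : nat)
  (P : 'I_k.+1 -> set (R * R)) (j : 'I_k.+1) :
  0 < phi -> phi <= 1 ->
  (forall i, is_polygon (P i)) ->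
  (forall i, (lattice_count (offset_plus (P j) (phi * diam (P j) / 2))
              <= lattice_count (offset_plus (P i) (phi * diam (P i) / 2)))%N) ->
  \bigcap_i offset_minus (P i) (phi * diam (P i)) !=set0 ->
  Num.sqrt 8 < phi * \big[Order.min/diam (P ord0)]_(i < k.+1) diam (P i) ->
  let Pmin := lattice_count (offset_plus (P j) (phi * diam (P j) / 2)) in
  let capQ := lattice_count (\bigcap_i offset_plus (P i) (phi * diam (P i) / 2)) in
  phi ^+ 2 / 2 * Pmin%:R <= capQ%:R /\ (capQ <= Pmin)%N.
Proof.
move=> phi0 phi1 _ Hmin [c Hc] Hsq Pmin capQ.
set dm := \big[Order.min/diam (P ord0)]_(i < k.+1) diam (P i) in Hsq.
have s8 : Num.sqrt 8 ^+ 2 = 8 :> R by rewrite sqr_sqrtr.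
have s80 : 0 <= Num.sqrt 8 :> R := sqrtr_ge0 _.
have s28 : 28 / 10 < Num.sqrt 8 :> R.
  have e : 28 / 10 = Num.sqrt ((28 / 10) ^+ 2) :> R.
    by rewrite sqrtr_sqr ger0_norm.
  rewrite {1}e ltr_sqrt; lra.
have x28 : 28 / 10 < phi * dm by lra.
have dmle : forall i, dm <= diam (P i) by move=> i; exact: bigmin_le'.
have dm0 : 0 < dm.
  rewrite ltNge; apply/negP => h.
  have : phi * dm <= 0 by rewrite pmulr_rle0.
  lra.
have d0 i : 0 < diam (P i) by apply: lt_le_trans (dmle i).
have Hci i := Hc i I.
have Hup i : exists m : nat,
    m%:R <= 2 * (diam (P i) - phi * diam (P i) / 2) + 1 /\
    finite_set [set z : int * int |
       offset_plus (P i) (phi * diam (P i) / 2) ((z.1)%:~R, (z.2)%:~R)] /\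
    (lattice_count (offset_plus (P i) (phi * diam (P i) / 2)) <= m * m)%N.
  have [Pc hc] := Hci i.
  have w0 : 0 < phi * diam (P i) by rewrite mulr_gt0.
  have wd : phi * diam (P i) <= diam (P i).
    by rewrite -[X in _ <= X]mul1r ler_wpM2r // ltW // d0.
  apply: count_upper; first lra.
  move=> z [y [Py dzy]].
  have dcy := upperB w0 wd Pc hc (diam_ub (d0 i)) Py.
  split.
    have := dist_c1 ((z.1)%:~R, (z.2)%:~R) y; rewrite /=; have := dist_c1 y c; rewrite dist_sym.
    have := ler_normD (z.1%:~R - y.1) (y.1 - c.1).
    rewrite addrA subrK /=; lra.
  have := dist_c2 ((z.1)%:~R, (z.2)%:~R) y; rewrite /=; have := dist_c2 y c; rewrite dist_sym.
  have := ler_normD (z.2%:~R - y.2) (y.2 - c.2).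
  rewrite addrA subrK /=; lra.
have [mj [_ [finj _]]] := Hup j.
have finQ : finite_set [set z : int * int |
    (\bigcap_i offset_plus (P i) (phi * diam (P i) / 2)) ((z.1)%:~R, (z.2)%:~R)].
  by apply: sub_finite_set finj => z /= /(_ j I).
have capQle : (capQ <= Pmin)%N.
  rewrite /capQ /Pmin /lattice_count; apply: fsubset_leq_card.
  by rewrite -fset_set_sub // => z /= /(_ j I).
split => //.
have [i0 dmi0] := bigmin_in (fun i => diam (P i)).
rewrite -/dm /= in dmi0.
have [m [mle [_ mcnt]]] := Hup i0.
rewrite -dmi0 in mle.
set h := 21 / 20 * (phi * dm).
have h0 : 0 <= h by rewrite /h; lra.
have [n [nge ncnt]] : exists n : nat, 2 * h - 1 <= n%:R /\ (n * n <= capQ)%N.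
  apply: (@count_lower _ c h) => // z hz1 hz2 i _.
  have [Pc hc] := Hci i.
  have w0 : 0 < phi * diam (P i) by rewrite mulr_gt0.
  apply: (lowerA w0 Pc hc).
  apply: dist_lt; first lra.
  have hu := sq_le hz1; have hv := sq_le hz2.
  apply: (arith1 hu hv (erefl : h = 21 / 20 * (phi * dm))) => //.
    by rewrite mulr_gt0.
  by rewrite ler_pM2l // dmle.

have Pm : (Pmin%:R : R) <= m%:R * m%:R by rewrite -natrM ler_nat (leq_trans (Hmin i0)).
have Cn : (n%:R * n%:R : R) <= capQ%:R by rewrite -natrM ler_nat.
have M0 : 0 <= m%:R :> R := ler0n _ _.
have N0 : 0 <= n%:R :> R := ler0n _ _.
exact: (arith2 phi0 phi1 x28 M0 mle nge N0 Pm Cn).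
Qed.
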